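(* Let $a>0$, $1<b\le 2$, $R_0>R_\infty>0$ and $\tau>0$, with $(a,b)\neq(1,2)$. Define, for $\Re\{s\}>0$, $Z_U(s):=R_\infty+(R_0-R_\infty)\,\frac{U(a,b,s\tau)}{1+U(a,b,s\tau)}$. Then $Z_U$ is not a single-time-constant Debye element: there is no $\tau'>0$ such that $Z_U(s)=R_\infty+\frac{R_0-R_\infty}{1+s\tau'}$ for all $s$ with $\Re\{s\}>0$. In particular, its time-domain relaxation is not a single exponential.
   Context: $U(a,b,z)$ denotes the Tricomi confluent hypergeometric function, given for $a>0$, $b>1$, $\Re\{z\}>0$ by $U(a,b,z)=\frac{1}{\Gamma(a)}\int_0^\infty e^{-zt}t^{a-1}(1+t)^{b-a-1}\,\mathrm{d}t$. *)

(* Defs.v *)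
From Stdlib Require Import Reals.
From Coquelicot Require Import Coquelicot.
Open Scope R_scope.

Definition Gamma_fun (a : R) : R :=
  RInt_gen (fun t => exp (- t) * Rpower t (a - 1))
           (at_right 0) (Rbar_locally p_infty).

(* complex exponential e^{-z t} for real t, written out:
   e^{-(x+iy)t} = e^{-xt} (cos(yt) - i sin(yt)) *)
Definition cexp_neg (z : C) (t : R) : C :=
  (exp (- (Re z) * t) * cos (Im z * t), - (exp (- (Re z) * t) * sin (Im z * t))).

(* Tricomi confluent hypergeometric function, integral representation
   (a > 0, b > 1, Re z > 0):
   U(a,b,z) = 1/Gamma(a) int_0^oo e^{-zt} t^{a-1} (1+t)^{b-a-1} dt. *)
Definition TricomiU (a b : R) (z : C) : C :=
  Cmult (RtoC (/ Gamma_fun a))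
    (@RInt_gen C_R_CompleteNormedModule
       (fun t : R => Cmult (cexp_neg z t)
                      (RtoC (Rpower t (a - 1) * Rpower (1 + t) (b - a - 1))))
       (at_right 0) (Rbar_locally p_infty)).

Definition Z_U (a b R0 Rinf tau : R) (s : C) : C :=
  let u := TricomiU a b (Cmult s (RtoC tau)) in
  Cplus (RtoC Rinf) (Cmult (RtoC (R0 - Rinf)) (Cdiv u (Cplus (RtoC 1) u))).

Definition Debye (R0 Rinf tau' : R) (s : C) : C :=
  Cplus (RtoC Rinf)
        (Cdiv (RtoC (R0 - Rinf)) (Cplus (RtoC 1) (Cmult s (RtoC tau')))).

(* Main.v *)
Require Import Defs.
From Stdlib Require Import Reals.
From Coquelicot Require Import Coquelicot.
Open Scope R_scope.

From Stdlib Require Import Lra Classical FunctionalExtensionality.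

Lemma mono_RInt (f : R -> R) (Hex : forall x y, 0 < x -> x <= y -> ex_RInt f x y)
  (Hpos : forall t, 0 < t -> 0 <= f t) x' x y y' : 0 < x' -> x' <= x -> x <= y -> y <= y' ->
  RInt f x y <= RInt f x' y'.
Proof.
intros H1 H2 H3 H4.
rewrite <- (RInt_Chasles f x' x y') by (apply Hex; lra).
rewrite <- (RInt_Chasles f x y y') by (apply Hex; lra).
assert (0 <= RInt f x' x) by (apply RInt_ge_0; [lra| apply Hex; lra| intros; apply Hpos; lra]).
assert (0 <= RInt f y y') by (apply RInt_ge_0; [lra| apply Hex; lra| intros; apply Hpos; lra]).
unfold plus; simpl. lra.
Qed.

Lemma ball_R (c e v : R) : ball c e v <-> Rabs (v - c) < e.
Proof. reflexivity. Qed.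

Lemma gen_approx (f : R -> R) L eps x y : 0 < eps -> 0 < x -> x <= y ->
  is_RInt_gen f (at_right 0) (Rbar_locally p_infty) L ->
  exists a b, 0 < a /\ a <= x /\ y <= b /\ exists v, is_RInt f a b v /\ Rabs (v - L) < eps.
Proof.
intros He Hx Hxy H.
specialize (H (ball L (mkposreal _ He)) (locally_ball _ _)).
destruct H as [Q R' HQ HR HQR].
destruct HQ as [d Hd]. destruct HR as [M HM].
exists (Rmin x (d/2)), (Rmax y (M+1)).
assert (0 < d) by apply cond_pos.
repeat split.
- apply Rmin_pos; lra.
- apply Rmin_l.
- apply Rmax_l.
- destruct (HQR (Rmin x (d/2)) (Rmax y (M+1))) as [v [Hv1 Hv2]].
  + apply Hd. unfold ball; simpl; unfold AbsRing_ball, abs, minus, plus, opp; simpl.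
    rewrite Ropp_0, Rplus_0_r. rewrite Rabs_right.
    * pose proof (Rmin_r x (d/2)). lra.
    * apply Rle_ge, Rlt_le, Rmin_pos; lra.
    * apply Rmin_pos; lra.
  + apply HM. pose proof (Rmax_r y (M+1)). lra.
  + exists v. split; auto.
Qed.

Lemma gen_lower (f : R -> R) L x y :
  (forall x y, 0 < x -> x <= y -> ex_RInt f x y) -> (forall t, 0 < t -> 0 <= f t) ->
  is_RInt_gen f (at_right 0) (Rbar_locally p_infty) L ->
  0 < x -> x <= y -> RInt f x y <= L.
Proof.
intros Hex Hpos H Hx Hxy.
destruct (Rle_lt_dec (RInt f x y) L) as [h|h]; auto.
exfalso.
destruct (gen_approx f L (RInt f x y - L) x y) as [a [b [Ha [Hax [Hyb [v [Hv Hv2]]]]]]]; try lra; auto.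
assert (Hu : RInt f a b = v) by (apply is_RInt_unique; exact Hv). subst v.
pose proof (mono_RInt f Hex Hpos a x y b Ha Hax Hxy Hyb).
apply Rabs_def2 in Hv2. lra.
Qed.

Lemma gen_upper (f : R -> R) L B :
  (forall x y, 0 < x -> x <= y -> RInt f x y <= B) ->
  is_RInt_gen f (at_right 0) (Rbar_locally p_infty) L -> L <= B.
Proof.
intros Hb H.
destruct (Rle_lt_dec L B) as [h|h]; auto.
exfalso.
destruct (gen_approx f L (L - B) 1 1) as [a [b [Ha [Hax [Hyb [v [Hv Hv2]]]]]]]; try lra; auto.
assert (Hu : RInt f a b = v) by (apply is_RInt_unique; exact Hv). subst v.
pose proof (Hb a b Ha ltac:(lra)).
apply Rabs_def2 in Hv2. lra.
Qed.

Lemma gen_exists (f : R -> R) B :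
  (forall x y, 0 < x -> x <= y -> ex_RInt f x y) -> (forall t, 0 < t -> 0 <= f t) ->
  (forall x y, 0 < x -> x <= y -> RInt f x y <= B) ->
  exists L, is_RInt_gen f (at_right 0) (Rbar_locally p_infty) L.
Proof.
intros Hex Hpos Hb.
set (S := fun r => exists x y, 0 < x /\ x <= y /\ r = RInt f x y).
destruct (completeness S) as [L [HL1 HL2]].
- exists B. intros r [x [y [H1 [H2 ->]]]]. apply Hb; auto.
- exists (RInt f 1 1). exists 1, 1. repeat split; lra.
- exists L. intros P [eps Heps].
  assert (exists x0 y0, 0 < x0 /\ x0 <= y0 /\ L - eps < RInt f x0 y0) as [x0 [y0 [H0 [H1 H2]]]].
  { apply NNPP. intros Hn.
    assert (L <= L - eps).
    { apply HL2. intros r [x [y [H1 [H2 ->]]]].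
      apply Rnot_lt_le. intros Hc. apply Hn. exists x, y. auto. }
    pose proof (cond_pos eps). lra. }
  apply (Filter_prod _ _ _ (fun x => 0 < x <= x0) (fun y => y0 < y)).
  + exists (mkposreal _ H0). intros t Ht Hpt. simpl.
    unfold ball in Ht; simpl in Ht; unfold AbsRing_ball, abs, minus, plus, opp in Ht; simpl in Ht.
    rewrite Ropp_0, Rplus_0_r in Ht. apply Rabs_def2 in Ht. lra.
  + exists y0. auto.
  + intros x y Hx Hy. simpl in *. exists (RInt f x y). split.
    * exact (RInt_correct (V:=R_CompleteNormedModule) f x y ltac:(apply Hex; lra)).
    * apply Heps. change (Rabs (RInt f x y - L) < eps).
      assert (RInt f x y <= L) by (apply HL1; exists x, y; repeat split; lra).
      pose proof (mono_RInt f Hex Hpos x x0 y0 y ltac:(lra) ltac:(lra) ltac:(lra) ltac:(lra)).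
      apply Rabs_def1; lra.
Qed.

Lemma ln_le_sub1 x : 0 < x -> ln x <= x - 1.
Proof.
intros Hx. destruct (Req_dec (ln x) 0) as [h|h].
- rewrite h. assert (x = 1). { rewrite <- (exp_ln x Hx), h. apply exp_0. } lra.
- pose proof (exp_ineq1 _ h). rewrite exp_ln in H by auto. lra.
Qed.

Lemma ln_mono x y : 0 < x -> x <= y -> ln x <= ln y.
Proof. intros Hx Hxy. destruct (Req_dec x y) as [->|h]. lra. left; apply ln_increasing; lra. Qed.

Lemma ln_nonneg x : 1 <= x -> 0 <= ln x.
Proof. intros; rewrite <- ln_1; apply ln_mono; lra. Qed.

Lemma cont_of_der (f : R -> R) x : ex_derive f x -> continuous f x.
Proof. intros H. exact (ex_derive_continuous (K:=R_AbsRing) (V:=R_NormedModule) f x H). Qed.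

Definition h (a b t : R) := Rpower t (a-1) * Rpower (1+t) (b-a-1).
Definition g (a b z t : R) := exp (- z * t) * h a b t.

Lemma h_exp a b t : h a b t = exp ((a-1)*ln t + (b-a-1)*ln(1+t)).
Proof. unfold h, Rpower. rewrite exp_plus. reflexivity. Qed.

Lemma cont_g a b z t : 0 < t -> continuous (g a b z) t.
Proof. intros Ht. apply cont_of_der. unfold g, h, Rpower. auto_derive. lra. Qed.

Lemma exRInt_g a b z x y : 0 < x -> x <= y -> ex_RInt (g a b z) x y.
Proof.
intros Hx Hxy. apply (ex_RInt_continuous (V:=R_CompleteNormedModule)). intros t Ht. apply cont_g.
rewrite Rmin_left in Ht; lra.
Qed.

Lemma int_exp z p q : z <> 0 -> is_RInt (fun t => exp (- z * t)) p q ((exp (-z*p) - exp (-z*q))/z).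
Proof.
intros Hz.
replace ((exp (-z*p) - exp (-z*q))/z) with (minus (- exp (-z*q)/z) (- exp(-z*p)/z))
  by (unfold minus, plus, opp; simpl; field; auto).
apply (is_RInt_derive (fun t => - exp (-z*t)/z)).
- intros t _. auto_derive. auto. field. auto.
- intros t _. apply cont_of_der. auto_derive. auto.
Qed.

Lemma int_pow a p q : 0 < a -> 0 < p -> p <= q ->
  is_RInt (fun t => Rpower t (a-1)) p q ((Rpower q a - Rpower p a)/a).
Proof.
intros Ha Hp Hpq.
replace ((Rpower q a - Rpower p a)/a) with (minus (Rpower q a/a) (Rpower p a/a))
  by (unfold minus, plus, opp; simpl; field; lra).
apply (is_RInt_derive (fun t => Rpower t a/a)).
- intros t Ht. rewrite Rmin_left in Ht by lra.
  unfold Rpower. auto_derive. lra.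
  replace ((a-1)*ln t) with (a * ln t + - ln t) by ring.
  rewrite exp_plus, exp_Ropp, exp_ln by lra. field. lra.
- intros t Ht. rewrite Rmin_left in Ht by lra. apply cont_of_der. unfold Rpower. auto_derive. lra.
Qed.

Lemma RInt_of (f : R -> R) p q l : is_RInt f p q l -> RInt f p q = l.
Proof. intros H. apply is_RInt_unique. exact H. Qed.

Lemma exRInt_of (f : R -> R) p q l : is_RInt f p q l -> ex_RInt f p q.
Proof. intros H. exists l. exact H. Qed.

Lemma is_RInt_scal_R (f : R -> R) p q k l : is_RInt f p q l -> is_RInt (fun t => k * f t) p q (k * l).
Proof. intros H. exact (is_RInt_scal (V:=R_NormedModule) f p q k l H). Qed.

Lemma g_pos a b z t : 0 <= g a b z t.
Proof. unfold g. rewrite h_exp. apply Rlt_le, Rmult_lt_0_compat; apply exp_pos. Qed.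

Lemma g_small a b z t : 0 < a -> b <= 2 -> 0 < z -> 0 < t <= 1 -> g a b z t <= 3 * Rpower t (a-1).
Proof.
intros Ha Hb Hz Ht. unfold g, h.
assert (Rpower (1+t) (b-a-1) <= 3).
{ unfold Rpower. apply Rle_trans with (exp 1); [|apply exp_le_3].
  assert (0 <= ln (1+t)) by (apply ln_nonneg; lra).
  assert (ln (1+t) <= 1) by (pose proof (ln_le_sub1 (1+t)); lra).
  destruct (Rle_dec 1 1); [|lra].
  assert ((b-a-1) * ln (1+t) <= 1) by nra.
  destruct (Req_dec ((b-a-1) * ln (1+t)) 1) as [e|e]. rewrite e; lra.
  left; apply exp_increasing; lra. }
assert (exp (-z*t) <= 1).
{ rewrite <- exp_0. destruct (Req_dec (-z*t) 0) as [e|e]. rewrite e; lra. left; apply exp_increasing; nra. }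
assert (0 < Rpower t (a-1)) by (unfold Rpower; apply exp_pos).
assert (0 < Rpower (1+t) (b-a-1)) by (unfold Rpower; apply exp_pos).
assert (0 < exp (-z*t)) by apply exp_pos.
apply Rle_trans with (Rpower t (a-1) * Rpower (1+t) (b-a-1)).
- rewrite <- (Rmult_1_l (Rpower t (a-1) * _)) at 2. apply Rmult_le_compat_r; nra.
- rewrite (Rmult_comm 3). apply Rmult_le_compat_l; lra.
Qed.

Lemma exp_le x y : x <= y -> exp x <= exp y.
Proof. intros H. destruct (Req_dec x y) as [->|e]. lra. left; apply exp_increasing; lra. Qed.

Lemma h_large a b t : 0 < a -> b <= 2 -> 1 <= t -> h a b t <= 3.
Proof.
intros Ha Hb Ht. rewrite h_exp.
apply Rle_trans with (exp 1); [|apply exp_le_3]. apply exp_le.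
assert (ln (1+t) - ln t <= 1).
{ replace (ln (1+t) - ln t) with (ln ((1+t)/t)).
  - pose proof (ln_le_sub1 ((1+t)/t) ltac:(apply Rdiv_lt_0_compat; lra)).
    assert ((1+t)/t - 1 <= 1). { apply Rle_trans with (1/t). right; field; lra.
      apply Rmult_le_reg_r with t; [lra|]. unfold Rdiv; rewrite Rmult_assoc, Rinv_l by lra. lra. }
    lra.
  - unfold Rdiv. rewrite ln_mult, ln_Rinv by (try apply Rinv_0_lt_compat; lra). ring. }
assert (0 <= ln (1+t) - ln t) by (pose proof (ln_mono t (1+t)); lra).
assert (0 <= ln (1+t)) by (apply ln_nonneg; lra).
replace ((a-1)*ln t + (b-a-1)*ln(1+t)) with ((1-a)*(ln (1+t) - ln t) + (b-2)*ln(1+t)) by ring.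
assert ((b-2)*ln(1+t) <= 0) by nra.
destruct (Rle_dec a 1); nra.
Qed.

Lemma g_large a b z t : 0 < a -> b <= 2 -> 1 <= t -> g a b z t <= 3 * exp (- z * t).
Proof.
intros Ha Hb Ht. unfold g. pose proof (h_large a b t Ha Hb Ht). pose proof (exp_pos (-z*t)). nra.
Qed.

Lemma J_exists a b z : 0 < a -> b <= 2 -> 0 < z ->
  exists L, is_RInt_gen (g a b z) (at_right 0) (Rbar_locally p_infty) L.
Proof.
intros Ha Hb Hz.
apply (gen_exists _ (3/a + 3/z)).
- intros; apply exRInt_g; auto.
- intros; apply g_pos.
- intros x y Hx Hxy.
  set (x' := Rmin x 1). set (y' := Rmax y 1).
  assert (0 < x') by (apply Rmin_pos; lra).
  assert (x' <= x) by apply Rmin_l. assert (x' <= 1) by apply Rmin_r.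
  assert (y <= y') by apply Rmax_l. assert (1 <= y') by apply Rmax_r.
  apply Rle_trans with (RInt (g a b z) x' y').
  { apply mono_RInt; auto. intros; apply exRInt_g; auto. intros; apply g_pos. }
  rewrite <- (RInt_Chasles (g a b z) x' 1 y') by (apply exRInt_g; lra).
  unfold plus; simpl.
  assert (RInt (g a b z) x' 1 <= 3/a).
  { pose proof (is_RInt_scal_R _ _ _ 3 _ (int_pow a x' 1 Ha ltac:(lra) ltac:(lra))) as I1.
    apply Rle_trans with (RInt (fun t => 3 * Rpower t (a-1)) x' 1).
    - apply RInt_le; auto. apply exRInt_g; lra. eapply exRInt_of; eauto.
      intros t Ht. apply g_small; auto; lra.
    - rewrite (RInt_of _ _ _ _ I1).
      assert (0 < Rpower x' a) by (unfold Rpower; apply exp_pos).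
      assert (Rpower 1 a = 1) by (unfold Rpower; rewrite ln_1, Rmult_0_r; apply exp_0).
      rewrite H5. unfold Rdiv. assert (0 < / a) by (apply Rinv_0_lt_compat; lra). nra. }
  assert (RInt (g a b z) 1 y' <= 3/z).
  { pose proof (is_RInt_scal_R _ _ _ 3 _ (int_exp z 1 y' ltac:(lra))) as I1.
    apply Rle_trans with (RInt (fun t => 3 * exp (-z*t)) 1 y').
    - apply RInt_le; auto. apply exRInt_g; lra. eapply exRInt_of; eauto.
      intros t Ht. apply g_large; auto; lra.
    - rewrite (RInt_of _ _ _ _ I1).
      pose proof (exp_pos (-z*y')). assert (exp (-z*1) <= exp 0) by (apply exp_le; lra). rewrite exp_0 in *.
      unfold Rdiv. assert (0 < / z) by (apply Rinv_0_lt_compat; lra).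
      apply Rmult_le_compat_l; [lra|]. rewrite <- (Rmult_1_l (/ z)) at 2. apply Rmult_le_compat_r; lra. }
  lra.
Qed.

Lemma gen_C (f : R -> R) l :
  is_RInt_gen f (at_right 0) (Rbar_locally p_infty) l ->
  is_RInt_gen (V:=C_R_NormedModule) (fun t => ((f t, 0) : C)) (at_right 0) (Rbar_locally p_infty) ((l, 0) : C).
Proof.
intros H P [eps Heps].
specialize (H (ball l eps) (locally_ball _ _)).
unfold filtermapi in *.
eapply filter_imp; [|exact H].
intros [x y] [v [Hv1 Hv2]]. simpl in *.
exists ((v, 0) : C). split.
- apply (is_RInt_fct_extend_pair (U:=R_NormedModule) (V:=R_NormedModule)); simpl.
  + exact Hv1.
  + pose proof (is_RInt_const (V:=R_NormedModule) x y zero) as Hc. change (scal (y - x) zero) with ((y-x)*0) in Hc. rewrite Rmult_0_r in Hc. exact Hc.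
- apply Heps. split; simpl. exact Hv2. apply ball_center.
Qed.

Lemma TricomiU_real a b z L : 0 < z ->
  is_RInt_gen (g a b z) (at_right 0) (Rbar_locally p_infty) L ->
  TricomiU a b ((z, 0) : C) = ((/ Gamma_fun a * L, 0) : C).
Proof.
intros Hz H.
unfold TricomiU.
replace (fun t : R => Cmult (cexp_neg (z, 0) t) (RtoC (Rpower t (a - 1) * Rpower (1 + t) (b - a - 1))))
  with (fun t => ((g a b z t, 0) : C)).
- rewrite (is_RInt_gen_unique (V:=C_R_CompleteNormedModule) _ _ (gen_C _ _ H)).
  unfold Cmult, RtoC; simpl. f_equal; ring.
- apply functional_extensionality. intros t. unfold cexp_neg, Cmult, RtoC, g, h; simpl.
  rewrite !Rmult_0_l, cos_0, sin_0. f_equal; ring.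
Qed.

Lemma C_cancel_plus (A X Y : C) : Cplus A X = Cplus A Y -> X = Y.
Proof. intros H. replace X with (Cminus (Cplus A X) A) by ring. rewrite H. ring. Qed.

Lemma C_cancel_mult (M X Y : C) : M <> RtoC 0 -> Cmult M X = Cmult M Y -> X = Y.
Proof. intros HM H. replace X with (Cmult (Cinv M) (Cmult M X)) by (field; auto). rewrite H. field; auto. Qed.

Lemma Cdiv_0 (u : C) : Cdiv u (RtoC 0) = RtoC 0.
Proof. unfold Cdiv, Cinv, Cmult, RtoC; simpl. f_equal; unfold Rdiv; ring. Qed.

Lemma RtoC_neq (r : R) : r <> 0 -> RtoC r <> RtoC 0.
Proof. intros H E. apply H. unfold RtoC in E. injection E. auto. Qed.

Lemma key a b R0 Rinf tau tau' : 0 < Rinf -> Rinf < R0 -> 0 < tau -> 0 < tau' ->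
  (forall s : C, 0 < Re s -> Z_U a b R0 Rinf tau s = Debye R0 Rinf tau' s) ->
  forall z, 0 < z -> TricomiU a b ((z,0) : C) = ((tau / (tau' * z), 0) : C).
Proof.
intros H1 H2 H3 H4 Heq z Hz.
set (s := ((z / tau, 0) : C)).
assert (Hs : 0 < Re s) by (simpl; apply Rdiv_lt_0_compat; lra).
specialize (Heq s Hs). unfold Z_U, Debye in Heq.
assert (Hst : Cmult s (RtoC tau) = ((z, 0) : C)) by (unfold s, Cmult, RtoC; simpl; f_equal; field; lra).
rewrite Hst in Heq.
set (u := TricomiU a b ((z,0) : C)) in *.
apply C_cancel_plus in Heq.
rewrite <- (Cmult_1_r (RtoC (R0 - Rinf))) in Heq at 2.
unfold Cdiv at 2 in Heq. rewrite <- Cmult_assoc in Heq.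
apply C_cancel_mult in Heq; [|apply RtoC_neq; lra].
set (D := Cplus (RtoC 1) (Cmult s (RtoC tau'))) in *.
assert (HD : D = ((1 + z * tau' / tau, 0) : C)) by (unfold D, s, Cplus, Cmult, RtoC; simpl; f_equal; field; lra).
assert (HD0 : D <> RtoC 0) by (rewrite HD; apply RtoC_neq; assert (0 < z * tau' / tau) by (apply Rdiv_lt_0_compat; nra); lra).
destruct (classic (Cplus (RtoC 1) u = RtoC 0)) as [Hu|Hu].
- rewrite Hu, Cdiv_0 in Heq. exfalso.
  assert (Cmult (RtoC 1) (Cinv D) <> RtoC 0).
  { intros E. apply (f_equal (fun w => Cmult w D)) in E. rewrite <- Cmult_assoc, Cinv_l in E by auto.
    rewrite Cmult_0_l, Cmult_1_l in E. unfold RtoC in E. injection E. lra. }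
  auto.
- assert (Hu2 : Cmult u (Cminus D (RtoC 1)) = RtoC 1).
  { assert (Cdiv u (Cplus (RtoC 1) u) * Cplus (RtoC 1) u * D = Cmult (RtoC 1) (Cinv D) * Cplus (RtoC 1) u * D)%C
      by (rewrite Heq; reflexivity).
    replace (Cdiv u (Cplus (RtoC 1) u) * Cplus (RtoC 1) u * D)%C with (u * D)%C in H by (field; auto).
    replace (Cmult (RtoC 1) (Cinv D) * Cplus (RtoC 1) u * D)%C with (Cplus (RtoC 1) u) in H by (field; auto).
    replace (Cmult u (Cminus D (RtoC 1))) with (Cminus (Cmult u D) u) by ring. rewrite H. ring. }
  assert (HD1 : Cminus D (RtoC 1) = ((z * tau' / tau, 0) : C)) by (rewrite HD; unfold Cminus, Cplus, Copp, RtoC; simpl; f_equal; ring).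
  rewrite HD1 in Hu2.
  assert (Hn : ((z * tau' / tau, 0) : C) <> RtoC 0) by (apply RtoC_neq; apply Rgt_not_eq, Rdiv_lt_0_compat; nra).
  replace u with (Cinv ((z * tau' / tau, 0) : C)).
  + unfold Cinv; simpl. f_equal; field; repeat split; try lra. 
  + replace u with (Cmult (Cmult u ((z * tau' / tau, 0) : C)) (Cinv ((z * tau' / tau, 0) : C))) by (field; auto).
    rewrite Hu2. ring.
Qed.

Lemma exp_ge1 u : 1 + u <= exp u.
Proof. destruct (Req_dec u 0) as [->|h]. rewrite exp_0; lra. left; apply exp_ineq1; auto. Qed.

Lemma exRInt_exp z x y : ex_RInt (fun t => exp (- z * t)) x y.
Proof.
apply (ex_RInt_continuous (V:=R_CompleteNormedModule)). intros t _. apply cont_of_der. auto_derive. auto.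
Qed.

Lemma Eint z : 0 < z -> is_RInt_gen (fun t => exp (- z * t)) (at_right 0) (Rbar_locally p_infty) (1/z).
Proof.
intros Hz.
assert (Hb : forall x y, 0 < x -> x <= y -> RInt (fun t => exp (- z * t)) x y <= 1/z).
{ intros x y Hx Hxy. rewrite (RInt_of _ _ _ _ (int_exp z x y ltac:(lra))).
  pose proof (exp_pos (-z*y)). assert (exp (-z*x) <= exp 0) by (apply exp_le; nra). rewrite exp_0 in *.
  unfold Rdiv. assert (0 < / z) by (apply Rinv_0_lt_compat; lra).
  rewrite Rmult_1_l. rewrite <- (Rmult_1_l (/ z)) at 2. apply Rmult_le_compat_r; lra. }
destruct (gen_exists _ (1/z) (fun x y _ _ => exRInt_exp z x y) (fun t _ => Rlt_le _ _ (exp_pos _)) Hb) as [L HL].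
assert (L <= 1/z) by (eapply gen_upper; eauto).
destruct (Req_dec L (1/z)) as [<-|hne]; auto.
exfalso.
set (d := 1/z - L).
assert (Hd : 0 < d) by (unfold d; lra).
set (x := d/4). set (y := Rmax x (4/(z*z*d))).
assert (Hx : 0 < x) by (unfold x; lra).
assert (Hxy : x <= y) by apply Rmax_l.
assert (Hy : 4/(z*z*d) <= y) by apply Rmax_r.
pose proof (gen_lower _ L x y (fun x y _ _ => exRInt_exp z x y) (fun t _ => Rlt_le _ _ (exp_pos _)) HL Hx Hxy) as Hlow.
rewrite (RInt_of _ _ _ _ (int_exp z x y ltac:(lra))) in Hlow.
pose proof (exp_ge1 (-z*x)).
assert (Hy0 : 0 < y) by lra.
assert (exp (-z*y) * (z*y) < 1).
{ pose proof (exp_ge1 (z*y)). replace (-z*y) with (-(z*y)) by ring. rewrite exp_Ropp.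
  pose proof (exp_pos (z*y)). apply Rmult_lt_reg_l with (exp (z*y)); auto.
  rewrite <- Rmult_assoc, Rinv_r by lra. nra. }
assert (Hy4 : 4 <= y * (z*z*d)).
{ assert (0 < z*z*d) by (apply Rmult_lt_0_compat; nra). unfold Rdiv in Hy. apply Rmult_le_reg_r with (/ (z*z*d)). apply Rinv_0_lt_compat; auto.
  replace (y * (z*z*d) * / (z*z*d)) with y by (field; lra). exact Hy. }
pose proof (exp_pos (-z*y)).
assert (HB : exp (-z*y) * 4 < z * d).
{ assert (h1 : exp (-z*y) * 4 <= exp (-z*y) * (y*(z*z*d))) by (apply Rmult_le_compat_l; lra).
  assert (h2 : exp (-z*y) * (z*y) * (z*d) < 1 * (z*d)) by (apply Rmult_lt_compat_r; nra).
  replace (exp (-z*y) * (y*(z*z*d))) with (exp (-z*y) * (z*y) * (z*d)) in h1 by ring. lra. }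
assert (HA : exp (-z*x) - exp (-z*y) <= z * L).
{ apply Rmult_le_compat_l with (r := z) in Hlow; [|lra].
  replace (z * ((exp (-z*x) - exp (-z*y)) / z)) with (exp (-z*x) - exp (-z*y)) in Hlow by (field; lra). exact Hlow. }
assert (z * L = 1 - z * d) by (unfold d; field; lra).
unfold x in *. nra.
Qed.

Lemma rel a b tau tau' L1 : 0 < tau -> 0 < tau' ->
  (forall z, 0 < z -> TricomiU a b ((z,0) : C) = ((tau / (tau' * z), 0) : C)) ->
  is_RInt_gen (g a b 1) (at_right 0) (Rbar_locally p_infty) L1 ->
  forall z Lz, 0 < z -> is_RInt_gen (g a b z) (at_right 0) (Rbar_locally p_infty) Lz -> z * Lz = L1.
Proof.
intros Ht Ht' HK H1 z Lz Hz Hz'.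
pose proof (HK 1 ltac:(lra)) as E1. rewrite (TricomiU_real a b 1 L1 ltac:(lra) H1) in E1.
pose proof (HK z Hz) as E2. rewrite (TricomiU_real _ _ _ _ Hz Hz') in E2.
injection E1 as E1. injection E2 as E2.
set (k := / Gamma_fun a) in *.
assert (k * L1 <> 0) by (rewrite E1; apply Rgt_not_eq, Rdiv_lt_0_compat; nra).
assert (k <> 0) by (intros e; rewrite e in H; apply H; ring).
apply Rmult_eq_reg_l with k; auto.
rewrite E1. replace (k * (z * Lz)) with (z * (k * Lz)) by ring. rewrite E2. field. lra.
Qed.

Lemma pos_int a b : exists m, 0 < m /\ forall L, is_RInt_gen (g a b 1) (at_right 0) (Rbar_locally p_infty) L -> m <= L.
Proof.
exists (RInt (g a b 1) 1 2). split.
- apply RInt_gt_0. lra. intros x Hx. unfold g. rewrite h_exp. apply Rmult_lt_0_compat; apply exp_pos.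
  intros; apply cont_g; lra.
- intros L HL. apply (gen_lower _ L 1 2); auto; try lra.
  intros; apply exRInt_g; auto. intros; apply g_pos.
Qed.

Lemma h_le_pow a b t : 1 < a -> b <= 2 -> 0 < t -> h a b t <= Rpower t (a-1).
Proof.
intros Ha Hb Ht. unfold h. unfold Rpower at 2.
assert (0 <= ln (1+t)) by (apply ln_nonneg; lra).
assert (exp ((b-a-1) * ln (1+t)) <= exp 0) by (apply exp_le; nra).
rewrite exp_0 in H0. pose proof (exp_pos ((a-1) * ln t)). unfold Rpower. rewrite <- (Rmult_1_r (exp ((a-1) * ln t))) at 2. apply Rmult_le_compat_l; lra.
Qed.

Lemma h_le_1 a b t : 1 <= a -> b <= 2 -> 0 < t -> h a b t <= 1.
Proof.
intros Ha Hb Ht. rewrite h_exp. apply Rle_trans with (exp 0); [|rewrite exp_0; lra]. apply exp_le.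
assert (0 <= ln (1+t)) by (apply ln_nonneg; lra).
assert (ln t <= ln (1+t)) by (apply ln_mono; lra).
replace ((a-1)*ln t + (b-a-1)*ln(1+t)) with ((a-1)*(ln t - ln (1+t)) + (b-2)*ln(1+t)) by ring.
nra.
Qed.

Lemma upper_a_gt1 a b z d L : 1 < a -> b <= 2 -> 0 < z -> 0 < d ->
  is_RInt_gen (g a b z) (at_right 0) (Rbar_locally p_infty) L ->
  z * L <= Rpower d (a-1) + exp (- z * d).
Proof.
intros Ha Hb Hz Hd HL.
assert (L <= (Rpower d (a-1) + exp (- z * d)) / z).
{ apply (gen_upper (g a b z)); auto.
  intros x y Hx Hxy.
  set (x' := Rmin x d). set (y' := Rmax y d).
  assert (0 < x') by (apply Rmin_pos; lra).
  assert (x' <= x) by apply Rmin_l. assert (x' <= d) by apply Rmin_r.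
  assert (y <= y') by apply Rmax_l. assert (d <= y') by apply Rmax_r.
  apply Rle_trans with (RInt (g a b z) x' y').
  { apply mono_RInt; auto. intros; apply exRInt_g; auto. intros; apply g_pos. }
  rewrite <- (RInt_Chasles (g a b z) x' d y') by (apply exRInt_g; lra).
  unfold plus; simpl.
  assert (RInt (g a b z) x' d <= Rpower d (a-1) / z).
  { pose proof (is_RInt_scal_R _ _ _ (Rpower d (a-1)) _ (int_exp z x' d ltac:(lra))) as I1.
    apply Rle_trans with (RInt (fun t => Rpower d (a-1) * exp (-z*t)) x' d).
    - apply RInt_le; auto. apply exRInt_g; lra. eapply exRInt_of; eauto.
      intros t Ht. unfold g. pose proof (h_le_pow a b t Ha Hb ltac:(lra)).
      assert (Rpower t (a-1) <= Rpower d (a-1)).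
      { unfold Rpower. apply exp_le. apply Rmult_le_compat_l. lra. apply ln_mono; lra. }
      pose proof (exp_pos (-z*t)). rewrite h_exp in *. nra.
    - rewrite (RInt_of _ _ _ _ I1).
      pose proof (exp_pos (-z*d)). assert (exp (-z*x') <= exp 0) by (apply exp_le; nra). rewrite exp_0 in *.
      assert (0 < Rpower d (a-1)) by (unfold Rpower; apply exp_pos).
      unfold Rdiv. assert (0 < / z) by (apply Rinv_0_lt_compat; lra).
      rewrite <- Rmult_assoc. apply Rmult_le_compat_r; [lra|]. nra. }
  assert (RInt (g a b z) d y' <= exp (-z*d) / z).
  { pose proof (int_exp z d y' ltac:(lra)) as I1.
    apply Rle_trans with (RInt (fun t => exp (-z*t)) d y').
    - apply RInt_le; auto. apply exRInt_g; lra. eapply exRInt_of; eauto.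
      intros t Ht. unfold g. pose proof (h_le_1 a b t ltac:(lra) Hb ltac:(lra)).
      pose proof (exp_pos (-z*t)). rewrite h_exp in *. nra.
    - rewrite (RInt_of _ _ _ _ I1).
      pose proof (exp_pos (-z*y')).
      unfold Rdiv. assert (0 < / z) by (apply Rinv_0_lt_compat; lra).
      apply Rmult_le_compat_r; lra. }
  unfold Rdiv in *. rewrite Rmult_plus_distr_r. lra. }
apply Rmult_le_compat_l with (r := z) in H; [|lra].
replace (z * ((Rpower d (a - 1) + exp (- z * d)) / z)) with (Rpower d (a - 1) + exp (- z * d)) in H by (field; lra).
exact H.
Qed.

Lemma exp_small u : 0 < u -> exp (- u) * u < 1.
Proof.
intros Hu. pose proof (exp_ge1 u). rewrite exp_Ropp.
pose proof (exp_pos u). apply Rmult_lt_reg_l with (exp u); auto.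
rewrite <- Rmult_assoc, Rinv_r by lra. lra.
Qed.

Lemma case_gt1 a b L1 : 1 < a -> b <= 2 ->
  is_RInt_gen (g a b 1) (at_right 0) (Rbar_locally p_infty) L1 ->
  (forall z Lz, 0 < z -> is_RInt_gen (g a b z) (at_right 0) (Rbar_locally p_infty) Lz -> z * Lz = L1) ->
  False.
Proof.
intros Ha Hb H1 Hrel.
destruct (pos_int a b) as [m [Hm Hm2]].
pose proof (Hm2 _ H1) as HP.
set (P := L1) in *.
set (d := exp (ln (P/4) / (a-1))).
assert (Hd : 0 < d) by apply exp_pos.
assert (Hdp : Rpower d (a-1) = P/4).
{ unfold Rpower, d. rewrite ln_exp. replace ((a-1) * (ln (P/4) / (a-1))) with (ln (P/4)) by (field; lra).
  apply exp_ln. lra. }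
set (z := 4 / (d * P)).
assert (Hz : 0 < z) by (unfold z; apply Rdiv_lt_0_compat; nra).
destruct (J_exists a b z ltac:(lra) Hb Hz) as [Lz HLz].
pose proof (Hrel z Lz Hz HLz) as E.
pose proof (upper_a_gt1 a b z d Lz Ha Hb Hz Hd HLz) as U.
rewrite Hdp, E in U.
assert (Hzd : z * d = 4 / P) by (unfold z; field; lra).
pose proof (exp_small (z*d) ltac:(nra)) as S.
replace (- z * d) with (- (z*d)) in U by ring.
rewrite Hzd in S, U.
assert (exp (- (4/P)) < P/4).
{ apply Rmult_lt_reg_r with (4/P). apply Rdiv_lt_0_compat; lra.
  replace (P/4 * (4/P)) with 1 by (field; lra). exact S. }
lra.
Qed.

Lemma h_dec a b s t : 0 < a -> a <= 1 -> b <= 2 -> ~ (a = 1 /\ b = 2) -> 0 < s -> s < t -> h a b t < h a b s.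
Proof.
intros Ha Ha1 Hb Hab Hs Hst. rewrite !h_exp. apply exp_increasing.
assert (D1 : ln s - ln (1+s) < ln t - ln (1+t)).
{ assert (ln (s * (1+t)) < ln (t * (1+s))) by (apply ln_increasing; nra).
  rewrite !ln_mult in H by lra. lra. }
assert (D2 : ln (1+s) < ln (1+t)) by (apply ln_increasing; lra).
replace ((a-1)*ln t + (b-a-1)*ln(1+t)) with ((a-1)*(ln t - ln (1+t)) + (b-2)*ln(1+t)) by ring.
replace ((a-1)*ln s + (b-a-1)*ln(1+s)) with ((a-1)*(ln s - ln (1+s)) + (b-2)*ln(1+s)) by ring.
destruct (Rlt_le_dec a 1) as [h1|h1].
- nra.
- assert (a = 1) by lra. assert (b < 2) by (destruct (Req_dec b 2); [exfalso; auto|lra]). nra.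
Qed.

Definition ee (z t : R) := exp (- z * t).

Definition phi a b t := (2 * ee 2 t - ee 1 t) * (h a b t - h a b (ln 2)).

Lemma ln2_lt1 : ln 2 < 1.
Proof.
pose proof (exp_ineq1 1 ltac:(lra)). rewrite <- (ln_exp 1). apply ln_increasing; lra.
Qed.

Lemma ln2_pos : 0 < ln 2.
Proof. rewrite <- ln_1. apply ln_increasing; lra. Qed.

Lemma ee_decomp t : ee 2 t = ee 1 t * ee 1 t.
Proof. unfold ee. rewrite <- exp_plus. f_equal. ring. Qed.

Lemma ee1_ln2 : ee 1 (ln 2) = /2.
Proof. unfold ee. rewrite <- Ropp_mult_distr_l, Rmult_1_l. rewrite exp_Ropp, exp_ln by lra. reflexivity. Qed.

Lemma phi_form a b t : phi a b t = ee 1 t * (2 * ee 1 t - 1) * (h a b t - h a b (ln 2)).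
Proof. unfold phi. rewrite ee_decomp. ring. Qed.

Lemma phi_nonneg a b t : 0 < a -> a <= 1 -> b <= 2 -> ~ (a = 1 /\ b = 2) -> 0 < t -> 0 <= phi a b t.
Proof.
intros Ha Ha1 Hb Hab Ht. rewrite phi_form.
pose proof ln2_pos.
assert (0 < ee 1 t) by apply exp_pos.
destruct (Rlt_le_dec t (ln 2)) as [h1|h1].
- pose proof (h_dec a b t (ln 2) Ha Ha1 Hb Hab Ht h1).
  assert (ee 1 (ln 2) < ee 1 t) by (unfold ee; apply exp_increasing; lra).
  rewrite ee1_ln2 in H2. 
  apply Rmult_le_pos; [apply Rmult_le_pos|]; lra.
- destruct (Req_dec t (ln 2)) as [->|h2]. { rewrite Rminus_diag. lra. }
  pose proof (h_dec a b (ln 2) t Ha Ha1 Hb Hab H ltac:(lra)).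
  assert (ee 1 t < ee 1 (ln 2)) by (unfold ee; apply exp_increasing; lra).
  rewrite ee1_ln2 in H2.
  replace (ee 1 t * (2 * ee 1 t - 1) * (h a b t - h a b (ln 2))) with (ee 1 t * ((1 - 2 * ee 1 t) * (h a b (ln 2) - h a b t))) by ring.
  apply Rmult_le_pos; [lra|apply Rmult_le_pos]; lra.
Qed.

Lemma phi_pos a b t : 0 < a -> a <= 1 -> b <= 2 -> ~ (a = 1 /\ b = 2) -> 1 < t -> 0 < phi a b t.
Proof.
intros Ha Ha1 Hb Hab Ht. rewrite phi_form.
pose proof ln2_pos. pose proof ln2_lt1.
assert (0 < ee 1 t) by apply exp_pos.
pose proof (h_dec a b (ln 2) t Ha Ha1 Hb Hab H ltac:(lra)).
assert (ee 1 t < ee 1 (ln 2)) by (unfold ee; apply exp_increasing; lra).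
rewrite ee1_ln2 in H3.
replace (ee 1 t * (2 * ee 1 t - 1) * (h a b t - h a b (ln 2))) with (ee 1 t * ((1 - 2 * ee 1 t) * (h a b (ln 2) - h a b t))) by ring.
apply Rmult_lt_0_compat; [lra|apply Rmult_lt_0_compat]; lra.
Qed.

Lemma cont_phi a b t : 0 < t -> continuous (phi a b) t.
Proof. intros Ht. apply cont_of_der. unfold phi, ee, h, Rpower. auto_derive. lra. Qed.

Lemma gen_eqv (f : R -> R) l l' : is_RInt_gen f (at_right 0) (Rbar_locally p_infty) l -> l = l' ->
  is_RInt_gen f (at_right 0) (Rbar_locally p_infty) l'.
Proof. intros H ->. exact H. Qed.

Lemma case_le1 a b L1 : 0 < a -> a <= 1 -> b <= 2 -> ~ (a = 1 /\ b = 2) ->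
  is_RInt_gen (g a b 1) (at_right 0) (Rbar_locally p_infty) L1 ->
  (forall z Lz, 0 < z -> is_RInt_gen (g a b z) (at_right 0) (Rbar_locally p_infty) Lz -> z * Lz = L1) ->
  False.
Proof.
intros Ha Ha1 Hb Hab H1 Hrel.
destruct (J_exists a b 2 Ha Hb ltac:(lra)) as [L2 H2].
pose proof (Hrel 2 L2 ltac:(lra) H2) as E.
pose proof (Eint 1 ltac:(lra)) as E1. pose proof (Eint 2 ltac:(lra)) as E2.
set (h0 := h a b (ln 2)).
pose proof (is_RInt_gen_minus _ _ _ _
  (is_RInt_gen_minus _ _ _ _ (is_RInt_gen_scal _ 2 _ H2) H1)
  (is_RInt_gen_scal _ h0 _ (is_RInt_gen_minus _ _ _ _ (is_RInt_gen_scal _ 2 _ E2) E1))) as HP.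
assert (Hphi : is_RInt_gen (phi a b) (at_right 0) (Rbar_locally p_infty) 0).
{ eapply is_RInt_gen_ext.
  2: { apply (gen_eqv _ _ _ HP).
       unfold minus, plus, opp, scal; simpl; unfold mult; simpl. rewrite <- E. field. }
  apply (Filter_prod _ _ _ (fun _ => True) (fun _ => True)).
  - apply filter_true. - apply filter_true.
  - intros x y _ _ t _. unfold phi, ee, g, minus, plus, opp, scal; simpl; unfold mult; simpl. fold h0. ring. }
pose proof (gen_lower (phi a b) 0 1 2) as Hl.
assert (Hi : 0 < RInt (phi a b) 1 2).
{ apply RInt_gt_0. lra. intros; apply phi_pos; auto; lra. intros; apply cont_phi; lra. }
assert (RInt (phi a b) 1 2 <= 0).
{ apply Hl; auto; try lra.
  - intros x y Hx Hxy. apply (ex_RInt_continuous (V:=R_CompleteNormedModule)). intros t Ht.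
    apply cont_phi. rewrite Rmin_left in Ht; lra.
  - intros t Ht. apply phi_nonneg; auto. }
lra.
Qed.

Theorem proposition1 (a b R0 Rinf tau : R) :
  0 < a -> 1 < b -> b <= 2 -> 0 < Rinf -> Rinf < R0 -> 0 < tau ->
  ~ (a = 1 /\ b = 2) ->
  ~ (exists tau' : R, 0 < tau' /\
       forall s : C, 0 < Re s -> Z_U a b R0 Rinf tau s = Debye R0 Rinf tau' s).
Proof.
intros Ha Hb1 Hb2 Hr1 Hr2 Ht Hab [tau' [Ht' Heq]].
pose proof (key a b R0 Rinf tau tau' Hr1 Hr2 Ht Ht' Heq) as HK.
destruct (J_exists a b 1 Ha Hb2 ltac:(lra)) as [L1 H1].
pose proof (rel a b tau tau' L1 Ht Ht' HK H1) as Hrel.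
destruct (Rle_lt_dec a 1) as [r|r].
- exact (case_le1 a b L1 Ha r Hb2 Hab H1 Hrel).
- exact (case_gt1 a b L1 r Hb2 H1 Hrel).
Qed.
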